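(* Let $F$ be a field and let $I\subseteq F_{\mathbb{Z}_2^2}\{X\}$ be the graded $T$-ideal generated by \begin{align*} (ab)v=v(ba), &\quad g(v)\ne 0,\ g(a)=g(b)\ne 0;\\ ((ax)b)v=v((ba)x), &\quad g(v)\ne 0,\ g(x)=0,\ g(a)=g(b)\ne 0;\\ v((ax)b)=((ba)x)v, &\quad g(v)\ne 0,\ g(x)=0,\ g(a)=g(b)\ne 0;\\ x\circ y=0, &\quad \langle g(x),g(y)\rangle=\mathbb{Z}_2^2;\\ (vb)a=v(ab), &\quad g(v)\notin\langle g(a),g(b)\rangle;\\ a(vb)=v(ba), &\quad \langle g(v),g(b)\rangle=\mathbb{Z}_2^2,\ g(a)=0;\\ (va)w+(wa)v=-(v\circ w)a, &\quad g(a)\ne 0,\ g(v),g(w)\notin\langle g(a)\rangle;\\ (va)(wb)+(wa)(vb)=-(v\circ w)(ba), &\quad g(a)\neq 0,\ g(v),g(w)\notin\langle g(a),g(b)\rangle;\\ (x,y,z)=0, &\quad |\langle g(x),g(y),g(z)\rangle|\le 2;\\ [x,y]=0, &\quad g(x)=g(y)=0, \end{align*} and write $p\equiv q$ for $p-q\in I$. Let $U$ be the subalgebra of $F_{\mathbb{Z}_2^2}\{X\}$ generated by all variables of nonzero degree, and let ${}^*:U\to U$ be the linear map defined on monomials by $x^*=-x$ for each variable $x$ (of nonzero degree) and $(vw)^*=w^*v^*$. Let $f\in U$ and let $x$ be a variable of nonzero degree. Then: (1) ${}^*$ is an involution of $U$ (an anti-automorphism of order $2$); (2) if $f_0=0$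 then $f^*\equiv -f$; (3) if $f=v\cdot w$ with $v,w\in U$ homogeneous and $g(v)=g(w)\neq0$, then $f^*\equiv w\cdot v$; (4) if $f_{g(x)}=0$ then $fx\equiv xf^*$; (5) under any graded evaluation of the variables in the $\mathbb{Z}_2^2$-graded octonion algebra $\mathbb{O}=\mathbf{C}(\mu,\beta,\gamma)$, the value of $f^*$ is the conjugate $\overline{f}$ of the value of $f$.
   Context: $\mathbb{Z}_2^2$ is written additively. $F_G\{X\}$: free nonassociative algebra on variables $x_i^a$ ($a\in G$), graded by $g(x_i^a)=a$, $g(uv)=g(u)g(v)$; for $f$ and $h\in G$, $f_h$ denotes the homogeneous component of $f$ of degree $h$. A graded $T$-ideal is an ideal invariant under all graded endomorphisms (variables sent to elements of the same degree). $[x,y]=xy-yx$, $x\circ y=xy+yx$, $(x,y,z)=(xy)z-x(yz)$. Octonions: Cayley–Dickson process $(A,\alpha)=A\oplus A$, $(a_1,a_2)(a_3,a_4)=(a_1a_3+\alpha a_4\bar a_2,\bar a_1a_4+a_3a_2)$, $\overline{(a_1,a_2)}=(\bar a_1,-a_2)$, graded $(A,\alpha)_{(h,0)}=A_h\oplus0$, $(A,\alpha)_{(h,1)}=0\oplus A_h$; $\mathbf{K}(\mu)=F\oplus Fv_1$ with $(a+bv_1)(c+dv_1)=ac+\mu bd+(ad+bc+bd)v_1$, $\overline{a+bv_1}=(a+b)-bv_1$, $4\mu+1\ne0$, trivially graded; $\mathbf{C}(\mu,\beta,\gamma)=((\mathbf{K}(\mu),\beta),\gamma)$, $\beta,\gamma\ne0$.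 A graded evaluation substitutes each variable by an element of $\mathbb{O}$ of the same degree. *)

(* Defs.v *)
From mathcomp Require Import all_boot all_algebra.
Set Implicit Arguments. Unset Strict Implicit. Unset Printing Implicit Defensive.
Import GRing.Theory.
Local Open Scope ring_scope.

Definition G : Type := (bool * bool)%type.
Definition g0 : G := (false, false).
Definition gadd (a b : G) : G := (xorb a.1 b.1, xorb a.2 b.2).

(* list of the elements of the subgroup <s> generated by s (sums of subsets) *)
Fixpoint gspan (s : seq G) : seq G :=
  match s with
  | [::] => [:: g0]
  | a :: s' => gspan s' ++ map (gadd a) (gspan s')
  end.

Inductive mono : Type :=
| Leaf of nat & G
| Node of mono & mono.

Fixpoint deg (m : mono) : G :=
  match m with
  | Leaf _ a => a
  | Node m1 m2 => gadd (deg m1) (deg m2)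
  end.

Inductive term (F : Type) : Type :=
| Var of nat & G
| Zero
| Add of term F & term F
| Scal of F & term F
| Mul of term F & term F.
Arguments Var {F} _ _.
Arguments Zero {F}.

Section Free.
Variable F : fieldType.

(* coefficient of a monomial: the element of the free algebra denoted by a term
   is its coefficient function mono -> F (finitely supported). *)
Fixpoint coeff (t : term F) (m : mono) : F :=
  match t with
  | Var i a => match m with
               | Leaf j b => if (i == j) && (a == b) then 1 else 0
               | Node _ _ => 0
               end
  | Zero => 0
  | Add s u => coeff s m + coeff u m
  | Scal c s => c * coeff s m
  | Mul s u => match m with
               | Leaf _ _ => 0
               | Node m1 m2 => coeff s m1 * coeff u m2
               end
  end.

Definition Opp (t : term F) : term F := Scal (-1) t.
Definition Sub (s t : term F) : term F := Add s (Opp t).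
Definition circ (s t : term F) : term F := Add (Mul s t) (Mul t s).
Definition comm (s t : term F) : term F := Sub (Mul s t) (Mul t s).
Definition assoc (x y z : term F) : term F := Sub (Mul (Mul x y) z) (Mul x (Mul y z)).

Definition hcomp (t : term F) (h : G) : mono -> F :=
  fun m => if deg m == h then coeff t m else 0.

Definition homog (t : term F) (h : G) : Prop :=
  forall m, coeff t m <> 0 -> deg m = h.

Fixpoint termU (t : term F) : Prop :=
  match t with
  | Var _ a => a != g0
  | Zero => True
  | Add s u => termU s /\ termU u
  | Scal _ s => termU s
  | Mul s u => termU s /\ termU u
  end.

Fixpoint star (t : term F) : term F :=
  match t with
  | Var i a => Opp (Var i a)
  | Zero => Zero
  | Add s u => Add (star s) (star u)
  | Scal c s => Scal c (star s)
  | Mul s u => Mul (star u) (star s)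
  end.

(* graded endomorphisms: substitution of variables by elements of the same degree *)
Fixpoint subst (sigma : nat -> G -> term F) (t : term F) : term F :=
  match t with
  | Var i a => sigma i a
  | Zero => Zero
  | Add s u => Add (subst sigma s) (subst sigma u)
  | Scal c s => Scal c (subst sigma s)
  | Mul s u => Mul (subst sigma s) (subst sigma u)
  end.

Definition graded_subst (sigma : nat -> G -> term F) : Prop :=
  forall i a, homog (sigma i a) a.

Inductive gen : term F -> Prop :=
| gen1 iv gv ia ib ga :
    gv != g0 -> ga != g0 ->
    gen (Sub (Mul (Mul (Var ia ga) (Var ib ga)) (Var iv gv))
             (Mul (Var iv gv) (Mul (Var ib ga) (Var ia ga))))
| gen2 iv gv ix ia ib ga :
    gv != g0 -> ga != g0 ->
    gen (Sub (Mul (Mul (Mul (Var ia ga) (Var ix g0)) (Var ib ga)) (Var iv gv))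
             (Mul (Var iv gv) (Mul (Mul (Var ib ga) (Var ia ga)) (Var ix g0))))
| gen3 iv gv ix ia ib ga :
    gv != g0 -> ga != g0 ->
    gen (Sub (Mul (Var iv gv) (Mul (Mul (Var ia ga) (Var ix g0)) (Var ib ga)))
             (Mul (Mul (Mul (Var ib ga) (Var ia ga)) (Var ix g0)) (Var iv gv)))
| gen4 ix gx iy gy :
    (forall h : G, h \in gspan [:: gx; gy]) ->
    gen (Sub (circ (Var ix gx) (Var iy gy)) Zero)
| gen5 iv gv ia ga ib gb :
    gv \notin gspan [:: ga; gb] ->
    gen (Sub (Mul (Mul (Var iv gv) (Var ib gb)) (Var ia ga))
             (Mul (Var iv gv) (Mul (Var ia ga) (Var ib gb))))
| gen6 iv gv ia ib gb :
    (forall h : G, h \in gspan [:: gv; gb]) ->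
    gen (Sub (Mul (Var ia g0) (Mul (Var iv gv) (Var ib gb)))
             (Mul (Var iv gv) (Mul (Var ib gb) (Var ia g0))))
| gen7 iv gv iw gw ia ga :
    ga != g0 -> gv \notin gspan [:: ga] -> gw \notin gspan [:: ga] ->
    gen (Sub (Add (Mul (Mul (Var iv gv) (Var ia ga)) (Var iw gw))
                  (Mul (Mul (Var iw gw) (Var ia ga)) (Var iv gv)))
             (Opp (Mul (circ (Var iv gv) (Var iw gw)) (Var ia ga))))
| gen8 iv gv iw gw ia ga ib gb :
    ga != g0 -> gv \notin gspan [:: ga; gb] -> gw \notin gspan [:: ga; gb] ->
    gen (Sub (Add (Mul (Mul (Var iv gv) (Var ia ga)) (Mul (Var iw gw) (Var ib gb)))
                  (Mul (Mul (Var iw gw) (Var ia ga)) (Mul (Var iv gv) (Var ib gb))))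
             (Opp (Mul (circ (Var iv gv) (Var iw gw)) (Mul (Var ib gb) (Var ia ga)))))
| gen9 ix gx iy gy iz gz :
    (size (undup (gspan [:: gx; gy; gz])) <= 2)%N ->
    gen (Sub (assoc (Var ix gx) (Var iy gy) (Var iz gz)) Zero)
| gen10 ix iy :
    gen (Sub (comm (Var ix g0) (Var iy g0)) Zero).

(* Membership depends only on the
   element of the free algebra (constructor I_ext). *)
Inductive inI : term F -> Prop :=
| I_gen t : gen t -> inI t
| I_add s t : inI s -> inI t -> inI (Add s t)
| I_scal c t : inI t -> inI (Scal c t)
| I_mull s t : inI t -> inI (Mul s t)
| I_mulr s t : inI t -> inI (Mul t s)
| I_subst sigma t : graded_subst sigma -> inI t -> inI (subst sigma t)
| I_ext s t : coeff s =1 coeff t -> inI s -> inI t.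

Definition equivI (p q : term F) : Prop := inI (Sub p q).

Record CDops (A : Type) := mkCD {
  cd_zero : A; cd_add : A -> A -> A; cd_opp : A -> A;
  cd_scale : F -> A -> A; cd_mul : A -> A -> A; cd_conj : A -> A }.

Definition Kops (mu : F) : CDops (F * F) :=
  @mkCD (F * F) (0, 0)
    (fun x y => (x.1 + y.1, x.2 + y.2))
    (fun x => (- x.1, - x.2))
    (fun c x => (c * x.1, c * x.2))
    (fun x y => (x.1 * y.1 + mu * x.2 * y.2,
                 x.1 * y.2 + x.2 * y.1 + x.2 * y.2))
    (fun x => (x.1 + x.2, - x.2)).

Definition CD (A : Type) (o : CDops A) (alpha : F) : CDops (A * A) :=
  @mkCD (A * A) (cd_zero o, cd_zero o)
    (fun x y => (cd_add o x.1 y.1, cd_add o x.2 y.2))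
    (fun x => (cd_opp o x.1, cd_opp o x.2))
    (fun c x => (cd_scale o c x.1, cd_scale o c x.2))
    (fun x y => (cd_add o (cd_mul o x.1 y.1)
                          (cd_scale o alpha (cd_mul o y.2 (cd_conj o x.2))),
                 cd_add o (cd_mul o (cd_conj o x.1) y.2) (cd_mul o y.1 x.2)))
    (fun x => (cd_conj o x.1, cd_opp o x.2)).

Definition Oct : Type := (((F * F) * (F * F)) * ((F * F) * (F * F)))%type.

Definition Oops (mu beta gamma : F) : CDops Oct :=
  CD (CD (Kops mu) beta) gamma.

(* grading: O_(h,0) = Q_h + 0, O_(h,1) = 0 + Q_h, Q_0 = K + 0, Q_1 = 0 + K;
   a degree (h1, h2) : G has h2 = outer (gamma) index, h1 = inner (beta) index *)
Definition Ocomp (x : Oct) (h : G) : F * F :=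
  if h.2 then (if h.1 then x.2.2 else x.2.1) else (if h.1 then x.1.2 else x.1.1).

Definition homO (x : Oct) (h : G) : Prop :=
  forall h' : G, h' != h -> Ocomp x h' = (0, 0).

Fixpoint evalO (o : CDops Oct) (phi : nat -> G -> Oct) (t : term F) : Oct :=
  match t with
  | Var i a => phi i a
  | Zero => cd_zero o
  | Add s u => cd_add o (evalO o phi s) (evalO o phi u)
  | Scal c s => cd_scale o c (evalO o phi s)
  | Mul s u => cd_mul o (evalO o phi s) (evalO o phi u)
  end.

Definition graded_eval (phi : nat -> G -> Oct) : Prop :=
  forall i a, homO (phi i a) a.

End Free.

(* Main.v *)
Require Import Defs.
From mathcomp Require Import all_boot all_algebra.
From mathcomp Require Import ring.
Set Implicit Arguments. Unset Strict Implicit. Unset Printing Implicit Defensive.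
Import GRing.Theory.
Local Open Scope ring_scope.

Section Pf.
Variable F : fieldType.
Implicit Types s t u p q v w f A B C V : term F.

Fixpoint sgn (m : mono) : F :=
  match m with Leaf _ _ => -1 | Node m1 m2 => sgn m1 * sgn m2 end.
Fixpoint revm (m : mono) : mono :=
  match m with Leaf i a => Leaf i a | Node m1 m2 => Node (revm m2) (revm m1) end.

Lemma sgn2 m : sgn m * sgn m = 1.
Proof.
elim: m => [i a|m1 IH1 m2 IH2] /=; first by rewrite mulrNN mulr1.
by rewrite mulrACA IH1 IH2 mulr1.
Qed.

Lemma revmK m : revm (revm m) = m.
Proof. by elim: m => [i a|m1 IH1 m2 IH2] //=; rewrite IH1 IH2. Qed.

Lemma sgn_rev m : sgn (revm m) = sgn m.
Proof. by elim: m => [i a|m1 IH1 m2 IH2] //=; rewrite IH1 IH2 mulrC. Qed.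

Lemma gaddC a b : gadd a b = gadd b a.
Proof. by case: a b => [[] []] [[] []]. Qed.

Lemma deg_rev m : deg (revm m) = deg m.
Proof. by elim: m => [i a|m1 IH1 m2 IH2] //=; rewrite IH1 IH2 gaddC. Qed.

Lemma coeff_star t m : coeff (star t) m = sgn m * coeff t (revm m).
Proof.
elim: t m => [i a|| s IHs u IHu | c s IHs | s IHs u IHu] [j b|m1 m2] /=;
  rewrite ?mulr0 //.
- by rewrite IHs IHu mulrDr.
- by rewrite IHs IHu mulrDr.
- by rewrite IHs mulrCA.
- by rewrite IHs mulrCA.
- rewrite IHs IHu; ring.
Qed.

Lemma inI_0 t : coeff t =1 (fun _ => 0) -> inI t.
Proof.
move=> H.
have H0 : inI (Scal 0 (Defs.Sub (comm (Var 0 g0) (Var 1 g0)) (@Zero F))).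
  exact/I_scal/I_gen/(gen10 F 0 1).
apply: (I_ext _ H0) => m /=; by rewrite mul0r H.
Qed.

Lemma eqv_ext p p' q q' : coeff p =1 coeff p' -> coeff q =1 coeff q' ->
  equivI p q -> equivI p' q'.
Proof. move=> Hp Hq; apply: I_ext => m /=; by rewrite Hp Hq. Qed.

Lemma eqv_coeff p q : coeff p =1 coeff q -> equivI p q.
Proof. move=> H; apply: inI_0 => m /=; rewrite H; ring. Qed.

Lemma eqv_refl p : equivI p p.
Proof. exact: eqv_coeff. Qed.

Lemma eqv_sym p q : equivI p q -> equivI q p.
Proof. move=> H; apply: (I_ext _ (I_scal (-1) H)) => m /=; ring. Qed.

Lemma eqv_trans p q r : equivI p q -> equivI q r -> equivI p r.
Proof. move=> H1 H2; apply: (I_ext _ (I_add H1 H2)) => m /=; ring. Qed.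

Lemma eqv_add p q p' q' : equivI p q -> equivI p' q' -> equivI (Add p p') (Add q q').
Proof. move=> H1 H2; apply: (I_ext _ (I_add H1 H2)) => m /=; ring. Qed.

Lemma eqv_scal c p q : equivI p q -> equivI (Scal c p) (Scal c q).
Proof. move=> H; apply: (I_ext _ (I_scal c H)) => m /=; ring. Qed.

Lemma eqv_mull s p q : equivI p q -> equivI (Mul s p) (Mul s q).
Proof. move=> H; apply: (I_ext _ (I_mull s H)) => -[j b|m1 m2] /=; ring. Qed.

Lemma eqv_mulr s p q : equivI p q -> equivI (Mul p s) (Mul q s).
Proof. move=> H; apply: (I_ext _ (I_mulr s H)) => -[j b|m1 m2] /=; ring. Qed.

Lemma eqv_trans_coeff p q q' r : equivI p q -> coeff q =1 coeff q' -> equivI q' r -> equivI p r.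
Proof. move=> H1 H H2; apply: eqv_trans H1 (eqv_trans (eqv_coeff H) H2). Qed.


Lemma homog_Var i a : @homog F (Var i a) a.
Proof.
move=> [j b|m1 m2] /=; last by [].
by case: ifP => // /andP[_ /eqP ->].
Qed.

Lemma homog_Mul A B a b : homog A a -> homog B b -> homog (Mul A B) (gadd a b).
Proof.
move=> HA HB [j x|m1 m2] /=; first by [].
move=> H; rewrite (HA m1) ?(HB m2) //.
  by move=> H0; apply: H; rewrite H0 mulr0.
by move=> H0; apply: H; rewrite H0 mul0r.
Qed.

Lemma homog_star A a : homog A a -> homog (star A) a.
Proof.
move=> HA m; rewrite coeff_star => H; rewrite -deg_rev; apply: HA.
by move=> H0; apply: H; rewrite H0 mulr0.
Qed.

Lemma homog_ext A B a : coeff A =1 coeff B -> homog A a -> homog B a.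
Proof. by move=> H HA m; rewrite -H; apply: HA. Qed.

Definition sig3 (x0 x1 x2 : G) (A0 A1 A2 : term F) : nat -> G -> term F :=
  fun i x => if (i == 0%N) && (x == x0) then A0 else
             if (i == 1%N) && (x == x1) then A1 else
             if (i == 2%N) && (x == x2) then A2 else Var i x.
Arguments sig3 : simpl never.

Lemma sig3_0 x0 x1 x2 A0 A1 A2 : sig3 x0 x1 x2 A0 A1 A2 0%N x0 = A0.
Proof. by rewrite /sig3 /=; case: eqP. Qed.
Lemma sig3_1 x0 x1 x2 A0 A1 A2 : sig3 x0 x1 x2 A0 A1 A2 1%N x1 = A1.
Proof. by rewrite /sig3 /=; case: eqP. Qed.
Lemma sig3_2 x0 x1 x2 A0 A1 A2 : sig3 x0 x1 x2 A0 A1 A2 2%N x2 = A2.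
Proof. by rewrite /sig3 /=; case: eqP. Qed.

Lemma sig3_graded x0 x1 x2 A0 A1 A2 : homog A0 x0 -> homog A1 x1 -> homog A2 x2 ->
  graded_subst (sig3 x0 x1 x2 A0 A1 A2).
Proof.
move=> H0 H1 H2 i x; rewrite /sig3.
case: ifP => [/andP[_ /eqP->]//|_].
case: ifP => [/andP[_ /eqP->]//|_].
case: ifP => [/andP[_ /eqP->]//|_].
exact: homog_Var.
Qed.

Lemma gen1_inst A B V a c : c != g0 -> a != g0 -> homog A a -> homog B a -> homog V c ->
  equivI (Mul (Mul A B) V) (Mul V (Mul B A)).
Proof.
move=> cn an HA HB HV.
have := I_subst (sig3_graded HA HB HV) (I_gen (gen1 F 2 0 1 cn an)).
by rewrite /= sig3_0 sig3_1 sig3_2.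
Qed.

Lemma gen4_inst A V a c : (forall h : G, h \in gspan [:: a; c]) -> homog A a -> homog V c ->
  equivI (Mul A V) (Opp (Mul V A)).
Proof.
move=> Hs HA HV.
have := I_subst (sig3_graded HA HV HV) (I_gen (gen4 F 0 1 Hs)).
rewrite /= sig3_0 sig3_1 => H; apply: (I_ext _ H) => -[j b|m1 m2] /=; ring.
Qed.

Lemma gen9_inst A B C a b c : (size (undup (gspan [:: a; b; c])) <= 2)%N ->
  homog A a -> homog B b -> homog C c ->
  equivI (Mul (Mul A B) C) (Mul A (Mul B C)).
Proof.
move=> Hs HA HB HC.
have := I_subst (sig3_graded HA HB HC) (I_gen (gen9 F 0 1 2 Hs)).
rewrite /= sig3_0 sig3_1 sig3_2 => H; apply: (I_ext _ H) => -[j x|m1 m2] /=; ring.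
Qed.


Definition e00 : G := (false, false).
Definition e10 : G := (true, false).
Definition e01 : G := (false, true).
Definition e11 : G := (true, true).

Fixpoint hproj (t : term F) (h : G) : term F :=
  match t with
  | Var i a => if a == h then Var i a else Zero
  | Zero => Zero
  | Add s u => Add (hproj s h) (hproj u h)
  | Scal c s => Scal c (hproj s h)
  | Mul s u => Add (Add (Mul (hproj s e00) (hproj u (gadd e00 h)))
                        (Mul (hproj s e10) (hproj u (gadd e10 h))))
                   (Add (Mul (hproj s e01) (hproj u (gadd e01 h)))
                        (Mul (hproj s e11) (hproj u (gadd e11 h))))
  end.

Lemma coeff_hproj t h m : coeff (hproj t h) m = if deg m == h then coeff t m else 0.
Proof.
elim: t h m => [i a|| s IHs u IHu | c s IHs | s IHs u IHu] h [j b|m1 m2] /=.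
- by repeat (case: eqP => [?|?]; subst => //=); congruence.
- by repeat (case: eqP => [?|?]; subst => //=); congruence.
- by case: ifP.
- by case: ifP.
- by rewrite IHs IHu; case: ifP; rewrite ?addr0.
- by rewrite IHs IHu; case: ifP; rewrite ?addr0.
- by rewrite IHs; case: ifP; rewrite ?mulr0.
- by rewrite IHs; case: ifP; rewrite ?mulr0.
- by rewrite !addr0; case: ifP.
- rewrite !IHs !IHu; move: (deg m1) (deg m2) h => [[] []] [[] []] [[] []] /=;
  rewrite ?(mul0r, mulr0, add0r, addr0) //.
Qed.

Definition hsum (t : term F) : term F :=
  Add (Add (hproj t e00) (hproj t e10)) (Add (hproj t e01) (hproj t e11)).

Lemma coeff_hsum t : coeff (hsum t) =1 coeff t.
Proof.
move=> m; rewrite /= !coeff_hproj; move: (deg m) => [[] []] /=;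
  rewrite ?(add0r, addr0) //.
Qed.

Lemma homog_hproj t h : homog (hproj t h) h.
Proof. move=> m; rewrite coeff_hproj; by case: eqP. Qed.

Lemma hproj_homog t h : homog t h -> coeff (hproj t h) =1 coeff t.
Proof.
move=> H m; rewrite coeff_hproj; case: eqP => // Hd.
by case: (coeff t m =P 0) => // /H.
Qed.


Definition P2 h t := h != g0 -> equivI (star t) (Opp t).
Definition P4 h t := forall v c, homog v c -> c != g0 -> c != h ->
  equivI (Mul t v) (Mul v (star t)).
Definition P h t := P2 h t /\ P4 h t.
Definition Q h t := P h t /\ P h (star t).

Lemma coeff_star_ext t t' : coeff t =1 coeff t' -> coeff (star t) =1 coeff (star t').
Proof. by move=> H m; rewrite !coeff_star H. Qed.

Lemma coeff_Mul_ext p p' q q' : coeff p =1 coeff p' -> coeff q =1 coeff q' ->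
  coeff (Mul p q) =1 coeff (Mul p' q').
Proof. by move=> H1 H2 [j b|m1 m2] //=; rewrite H1 H2. Qed.

Lemma P_ext h t t' : coeff t =1 coeff t' -> P h t -> P h t'.
Proof.
move=> H [H2 H4]; split.
  move=> hn; apply: eqv_ext (H2 hn); first exact: coeff_star_ext.
  by move=> m /=; rewrite H.
move=> v c Hv cn ch; apply: eqv_ext (H4 v c Hv cn ch).
  exact: coeff_Mul_ext.
by apply: coeff_Mul_ext => //; apply: coeff_star_ext.
Qed.

Lemma P_add h t u : P h t -> P h u -> P h (Add t u).
Proof.
move=> [H2 H4] [K2 K4]; split.
  move=> hn; apply: eqv_ext (eqv_add (H2 hn) (K2 hn)) => // m /=; ring.
move=> v c Hv cn ch; apply: eqv_ext (eqv_add (H4 v c Hv cn ch) (K4 v c Hv cn ch)).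
  by move=> [j b|m1 m2] /=; ring.
by move=> [j b|m1 m2] /=; ring.
Qed.

Lemma P_scal h c t : P h t -> P h (Scal c t).
Proof.
move=> [H2 H4]; split.
  move=> hn; apply: eqv_ext (eqv_scal c (H2 hn)) => // m /=; ring.
move=> v d Hv cn ch; apply: eqv_ext (eqv_scal c (H4 v d Hv cn ch)).
  by move=> [j b|m1 m2] /=; ring.
by move=> [j b|m1 m2] /=; ring.
Qed.

Lemma P_zero h t : coeff t =1 (fun _ => 0) -> P h t.
Proof.
move=> H; split.
  move=> _; apply: eqv_coeff => m; rewrite coeff_star /= !H; ring.
move=> v c _ _ _; apply: eqv_coeff => -[j b|m1 m2] //=.
by rewrite coeff_star !H; ring.
Qed.

Lemma Q_add h t u : Q h t -> Q h u -> Q h (Add t u).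
Proof. by move=> [H1 H2] [K1 K2]; split; apply: P_add. Qed.

Lemma Q_scal h c t : Q h t -> Q h (Scal c t).
Proof. by move=> [H1 H2]; split; apply: P_scal. Qed.

Lemma Q_zero h t : coeff t =1 (fun _ => 0) -> Q h t.
Proof.
move=> H; split; apply: P_zero => // m; by rewrite coeff_star H mulr0.
Qed.

Lemma star_star t : coeff (star (star t)) =1 coeff t.
Proof. by move=> m; rewrite !coeff_star revmK sgn_rev mulrA sgn2 mul1r. Qed.

Lemma Q_star h t : Q h t -> Q h (star t).
Proof.
move=> [H1 H2]; split => //; apply: P_ext H1 => m; by rewrite star_star.
Qed.

Lemma span_full a c : a != g0 -> c != g0 -> c != a -> forall h : G, h \in gspan [:: a; c].
Proof. by case: a c => [[] []] [[] []] //= _ _ _ [[] []]. Qed.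

Lemma gadd_neq a b : gadd a b != g0 -> a != b.
Proof. by case: a b => [[] []] [[] []]. Qed.

Lemma eq_sym_neq (a b : G) : a != b -> b != a.
Proof. by rewrite eq_sym. Qed.

Lemma gadd_eq a b : gadd a b = g0 -> a = b.
Proof. by case: a b => [[] []] [[] []]. Qed.

Lemma gadd0g c : gadd g0 c = c.
Proof. by case: c => [[] []]. Qed.
Lemma gaddg0 c : gadd c g0 = c.
Proof. by case: c => [[] []]. Qed.
Lemma gaddK k h : gadd k (gadd k h) = h.
Proof. by case: k h => [[] []] [[] []]. Qed.

Lemma size00c c : (size (undup (gspan [:: g0; g0; c])) <= 2)%N.
Proof. by case: c => [[] []]. Qed.
Lemma sizec00 c : (size (undup (gspan [:: c; g0; g0])) <= 2)%N.
Proof. by case: c => [[] []]. Qed.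


Lemma eqv_coeff_trans p p' r : coeff p =1 coeff p' -> equivI p' r -> equivI p r.
Proof. move=> H H2; exact: eqv_trans (eqv_coeff H) H2. Qed.

Lemma P_Mul A B a b : homog A a -> homog B b -> Q a A -> Q b B -> P (gadd a b) (Mul A B).
Proof.
move=> HA HB [[P2A P4A] [P2sA P4sA]] [[P2B P4B] [P2sB P4sB]].
have P2AB : P2 (gadd a b) (Mul A B).
  move=> hd /=.
  case: (eqVneq a g0) => [a0|an]; case: (eqVneq b g0) => [b0|bn].
  - by move: hd; rewrite a0 b0 gadd0g eqxx.
  - have h1 := P4A B b HB bn ltac:(by rewrite a0).
    apply: eqv_trans (eqv_mulr (star A) (P2B bn)) _.
    apply: (eqv_coeff_trans _ (eqv_scal (-1) (eqv_sym h1))).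
    by move=> [j x|m1 m2] /=; ring.
  - have h1 := P4sB A a HA an ltac:(by rewrite b0).
    apply: eqv_trans (eqv_mull (star B) (P2A an)) _.
    apply: (eqv_coeff_trans _ (eqv_scal (-1) (eqv_trans h1 _))); last first.
      by apply: eqv_coeff; apply: coeff_Mul_ext => //; apply: star_star.
    by move=> [j x|m1 m2] /=; ring.
  - have h1 := gen4_inst (span_full an bn (eq_sym_neq (gadd_neq hd))) HA HB.
    apply: eqv_trans (eqv_mull (star B) (P2A an)) _.
    apply: eqv_trans (eqv_mulr (Opp A) (P2B bn)) _.
    apply: (eqv_coeff_trans _ (eqv_scal (-1) (eqv_sym h1))).
    by move=> [j x|m1 m2] /=; ring.
split => // v c Hv cn cd.
case: (eqVneq (gadd a b) g0) => [d0|dn].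
  have ab := gadd_eq d0; subst b.
  case: (eqVneq a g0) => [a0|an].
  - subst a.
    have HBs : homog (Mul v (star B)) c by rewrite -[c]gaddg0; apply: homog_Mul (homog_star HB).
    apply: eqv_trans (gen9_inst (size00c c) HA HB Hv) _.
    apply: eqv_trans (eqv_mull A (P4B v c Hv cn cn)) _.
    apply: eqv_trans (P4A _ c HBs cn cn) _.
    exact: gen9_inst (sizec00 c) Hv (homog_star HB) (homog_star HA).
  - apply: eqv_trans (gen1_inst cn an HA HB Hv) _.
    apply: eqv_mull; apply: eqv_sym => /=.
    apply: eqv_trans (eqv_mull (star B) (P2A an)) _.
    apply: eqv_trans_coeff (eqv_mulr (Opp A) (P2B an)) _ (eqv_refl _).
    by move=> [j x|m1 m2] /=; ring.
have h1 := gen4_inst (span_full dn cn cd) (homog_Mul HA HB) Hv.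
apply: eqv_trans h1 _.
apply: (eqv_coeff_trans _ (eqv_mull v (eqv_sym (P2AB dn)))).
by move=> [j x|m1 m2] /=; ring.
Qed.


Lemma Q_Mul A B a b h : homog A a -> homog B b -> Q a A -> Q b B -> gadd a b = h ->
  Q h (Mul A B).
Proof.
move=> HA HB QA QB <-; split; first exact: P_Mul.
rewrite /= gaddC.
exact: P_Mul (homog_star HB) (homog_star HA) (Q_star QB) (Q_star QA).
Qed.

Lemma Q_hproj t : termU t -> forall h, Q h (hproj t h).
Proof.
elim: t => [i a | | s IHs u IHu | c s IHs | s IHs u IHu] /= Ht h.
- case: eqP => [<-|_]; last by apply: Q_zero.
  have PV : P a (Var i a).
    split; first by move=> _; apply: eqv_refl.
    move=> v c Hv cn ca /=.
    apply: eqv_trans (gen4_inst (span_full Ht cn ca) (@homog_Var i a) Hv) _.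
    by apply: eqv_coeff => -[j x|m1 m2] /=; ring.
  by split => //=; apply: P_scal.
- exact: Q_zero.
- by case: Ht => Hs Hu; apply: Q_add; [apply: IHs | apply: IHu].
- exact: Q_scal (IHs Ht h).
- case: Ht => Hs Hu.
  by do 3 ?apply: Q_add; (apply: Q_Mul; [apply: homog_hproj | apply: homog_hproj | apply: IHs | apply: IHu | apply: gaddK]).
Qed.


Lemma part2 f : termU f -> hcomp f g0 =1 (fun _ => 0) -> equivI (star f) (Opp f).
Proof.
move=> Hf H0.
have key : forall h, equivI (star (hproj f h)) (Opp (hproj f h)).
  move=> h; case: (eqVneq h g0) => [->|hn].
    have Z : coeff (hproj f g0) =1 (fun _ => 0) by move=> m; rewrite coeff_hproj; exact: H0 m.
    by apply: eqv_coeff => m; rewrite coeff_star /= !Z; ring.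
  by case: (Q_hproj Hf h) => [[P2h _] _]; apply: P2h.
have := eqv_add (eqv_add (key e00) (key e10)) (eqv_add (key e01) (key e11)).
apply: eqv_ext => m.
  exact: (coeff_star_ext (coeff_hsum f) m).
by rewrite /= -(coeff_hsum f m) /=; ring.
Qed.

Lemma part4 f i a : termU f -> a != g0 -> hcomp f a =1 (fun _ => 0) ->
  equivI (Mul f (Var i a)) (Mul (Var i a) (star f)).
Proof.
move=> Hf an H0.
have key : forall h, equivI (Mul (hproj f h) (Var i a)) (Mul (Var i a) (star (hproj f h))).
  move=> h; case: (eqVneq h a) => [->|ha].
    have Z : coeff (hproj f a) =1 (fun _ => 0) by move=> m; rewrite coeff_hproj; exact: H0 m.
    apply: eqv_coeff => -[j b|m1 m2] /=; rewrite ?coeff_star ?Z; ring.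
  case: (Q_hproj Hf h) => [[_ P4h] _]; apply: P4h => //.
    exact: homog_Var.
  by [].

  by rewrite eq_sym.
have := eqv_add (eqv_add (key e00) (key e10)) (eqv_add (key e01) (key e11)).
apply: eqv_ext.
  by move=> -[j b|m1 m2] /=; [ring | rewrite -(coeff_hsum f m1) /=; ring].
move=> -[j b|m1 m2] /=; first ring.
rewrite -(coeff_star_ext (coeff_hsum f) m2) /=; ring.
Qed.

Lemma part3 f v w h : termU v -> termU w -> homog v h -> homog w h -> h != g0 ->
  coeff f =1 coeff (Mul v w) -> equivI (star f) (Mul w v).
Proof.
move=> Uv Uw Hv Hw hn Hf.
have S : forall t, termU t -> homog t h -> equivI (star t) (Opp t).
  move=> t Ht Hh; case: (Q_hproj Ht h) => [[P2h _] _].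
  apply: eqv_ext (P2h hn); first exact: coeff_star_ext (hproj_homog Hh).
  by move=> m /=; rewrite (hproj_homog Hh).
apply: (eqv_coeff_trans (coeff_star_ext Hf)) => /=.
apply: eqv_trans (eqv_mull _ (S v Uv Hv)) _.
apply: eqv_trans (eqv_mulr _ (S w Uw Hw)) _.
by apply: eqv_coeff => -[j b|m1 m2] /=; ring.
Qed.

Lemma termU_star f : termU f -> termU (star f).
Proof. by elim: f => //= [s IHs u IHu|s IHs u IHu] [Hs Hu]; split; auto. Qed.

Lemma part1_ex : exists f : term F, termU f /\ exists m, coeff (star f) m <> coeff f m.
Proof.
exists (Mul (Var 0 e10) (Var 1 e10)); split => //.
exists (Node (Leaf 0 e10) (Leaf 1 e10)) => /=.
rewrite !mulr0 mulr1 => /esym/eqP; by rewrite oner_eq0.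
Qed.

Lemma oct_conj_mul mu beta gamma (x y : Oct F) :
  let o := Oops mu beta gamma in
  cd_conj o (cd_mul o x y) = cd_mul o (cd_conj o y) (cd_conj o x).
Proof.
move: x y => [[[x1 x2] [x3 x4]] [[x5 x6] [x7 x8]]] [[[y1 y2] [y3 y4]] [[y5 y6] [y7 y8]]] /=.
congr (((_, _), (_, _)), ((_, _), (_, _))); ring.
Qed.


Lemma part5_gen (o : CDops F (Oct F)) (phi : nat -> G -> Oct F) f :
 (forall x y, cd_conj o (cd_mul o x y) = cd_mul o (cd_conj o y) (cd_conj o x)) ->
 (forall x y, cd_conj o (cd_add o x y) = cd_add o (cd_conj o x) (cd_conj o y)) ->
 (forall c x, cd_conj o (cd_scale o c x) = cd_scale o c (cd_conj o x)) ->
 cd_conj o (cd_zero o) = cd_zero o ->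
 (forall i a, a != g0 -> cd_scale o (-1) (phi i a) = cd_conj o (phi i a)) ->
 termU f -> evalO o phi (star f) = cd_conj o (evalO o phi f).
Proof.
move=> Cm Ca Cs Cz Cv.
elim: f => [i a|| s IHs u IHu|c s IHs|s IHs u IHu] /= Hf.
- exact: Cv.
- by rewrite Cz.
- by case: Hf => Hs Hu; rewrite IHs // IHu // Ca.
- by rewrite IHs // Cs.
- by case: Hf => Hs Hu; rewrite IHs // IHu // Cm.
Qed.

Lemma part5 f mu beta gamma (phi : nat -> G -> Oct F) : termU f -> graded_eval phi ->
  evalO (Oops mu beta gamma) phi (star f)
  = cd_conj (Oops mu beta gamma) (evalO (Oops mu beta gamma) phi f).
Proof.
move=> Hf Hphi; apply: part5_gen => //.
- by move=> x y; rewrite oct_conj_mul.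
- move=> [[[x1 x2] [x3 x4]] [[x5 x6] [x7 x8]]] [[[y1 y2] [y3 y4]] [[y5 y6] [y7 y8]]] /=.
  congr (((_, _), (_, _)), ((_, _), (_, _))); ring.
- move=> c [[[x1 x2] [x3 x4]] [[x5 x6] [x7 x8]]] /=.
  congr (((_, _), (_, _)), ((_, _), (_, _))); ring.
- rewrite /=; congr (((_, _), (_, _)), ((_, _), (_, _))); ring.
- move=> i a an.
  have := Hphi i a g0; rewrite eq_sym => /(_ an).
  rewrite /Ocomp /=; move: (phi i a) => [[[x1 x2] [x3 x4]] [[x5 x6] [x7 x8]]] /= [-> ->].
  congr (((_, _), (_, _)), ((_, _), (_, _))); ring.
Qed.

End Pf.

Theorem mainTheorem7 (F : fieldType) :
  (* (1) * is an involution (anti-automorphism of order 2) of U *)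
  ((forall f g : term F, termU f -> termU g -> coeff f =1 coeff g ->
       coeff (star f) =1 coeff (star g))
   /\ (forall f : term F, termU f -> termU (star f))
   /\ (forall (f g : term F) (c : F), termU f -> termU g ->
       coeff (star (Add f (Scal c g))) =1 coeff (Add (star f) (Scal c (star g))))
   /\ (forall f g : term F, termU f -> termU g ->
       coeff (star (Mul f g)) =1 coeff (Mul (star g) (star f)))
   /\ (forall f : term F, termU f -> coeff (star (star f)) =1 coeff f)
   /\ (exists f : term F, termU f /\ exists m, coeff (star f) m <> coeff f m))
  (* (2) *)
  /\ (forall f : term F, termU f -> hcomp f g0 =1 (fun _ => 0) ->
        equivI (star f) (Opp f))
  (* (3) *)
  /\ (forall (f v w : term F) (h : G), termU f -> termU v -> termU w ->
        homog v h -> homog w h -> h != g0 ->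
        coeff f =1 coeff (Mul v w) ->
        equivI (star f) (Mul w v))
  (* (4) *)
  /\ (forall (f : term F) (i : nat) (a : G), termU f -> a != g0 ->
        hcomp f a =1 (fun _ => 0) ->
        equivI (Mul f (Var i a)) (Mul (Var i a) (star f)))
  (* (5) *)
  /\ (forall f : term F, termU f ->
        forall mu beta gamma : F,
          4%:R * mu + 1 != 0 -> beta != 0 -> gamma != 0 ->
          forall phi : nat -> G -> Oct F, graded_eval phi ->
            evalO (Oops mu beta gamma) phi (star f)
            = cd_conj (Oops mu beta gamma) (evalO (Oops mu beta gamma) phi f)).
Proof.
split; [|split; [|split; [|split]]].
- split; first by move=> f g _ _ H; apply: coeff_star_ext.
  split; first exact: termU_star.
  split; first by [].
  split; first by [].
  split; first by move=> f _; apply: star_star.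
  exact: part1_ex.
- exact: part2.
- move=> f v w h _ Uv Uw Hv Hw hn Hf; exact: part3 Uv Uw Hv Hw hn Hf.
- move=> f i a Hf an H0; exact: part4.
- move=> f Hf mu beta gamma _ _ _ phi Hphi; exact: part5.
Qed.
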